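(* Let $G$ be a finite, simple, connected graph with $res_{wt}(G)=k$. Then the maximum degree of $G$ satisfies $\Delta(G)\le 2^{k-1}+k-1$.
   Context: $d(x,y)$ is the shortest-path distance. A set $W\subseteq V(G)$ is a resolving set if for every two distinct vertices $y,z$ there is $x\in W$ with $d(y,x)\ne d(z,x)$. A set $W$ is a weak total resolving set (WTR-set) if $W$ is resolving and, for every $w\in W$ and every $x\in V(G)\setminus W$, there is $w'\in W\setminus\{w\}$ with $d(x,w')\ne d(w,w')$. The weak total resolving number $res_{wt}(G)$ is the minimum positive integer $r$ such that every set of $r$ vertices of $G$ is a WTR-set for $G$. *)

(* Defs.v *)
From mathcomp Require Import all_boot.
Set Implicit Arguments. Unset Strict Implicit. Unset Printing Implicit Defensive.

Section Graph.
Variables (T : finType) (e : rel T).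

Definition simple_graph := symmetric e /\ irreflexive e.
Definition connected_graph := forall x y : T, connect e x y.

Definition walkn (x y : T) (n : nat) : bool :=
  [exists p : n.-tuple T, path e x p && (last x p == y)].

(* shortest-path distance: least n (< #|T|) such that a walk of length n
   from x to y exists; in a connected graph it is the usual distance. *)
Definition dist (x y : T) : nat := find (walkn x y) (iota 0 #|T|).

Definition resolving (W : {set T}) : Prop :=
  forall y z : T, y != z -> exists2 x, x \in W & dist y x != dist z x.

Definition WTR (W : {set T}) : Prop :=
  resolving W /\
  forall w x, w \in W -> x \notin W ->
    exists2 w', w' \in W :\ w & dist x w' != dist w w'.

Definition all_WTR (r : nat) : Prop := forall W : {set T}, #|W| = r -> WTR W.

Definition res_wt_eq (k : nat) : Prop :=
  0 < k /\ all_WTR k /\ (forall r, 0 < r -> r < k -> ~ all_WTR r).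

Definition max_degree : nat := \max_(v : T) #|[set u | e v u]|.

End Graph.

(* Main.v *)
Require Import Defs.
From mathcomp Require Import all_boot.
From mathcomp Require Import zify.

Set Implicit Arguments. Unset Strict Implicit. Unset Printing Implicit Defensive.

Section Aux.
Variables (T : finType) (e : rel T).

Lemma dist_le x y m : walkn e x y m -> m < #|T| -> dist e x y <= m.
Proof.
move=> Hw Hm; rewrite /dist; case: leqP => // Hlt.
have := before_find 0 Hlt; rewrite nth_iota // add0n Hw //.
Qed.

Lemma dist0 x y : dist e x y = 0 -> x = y.
Proof.
move=> H.
have Hn : 0 < #|T| by apply/card_gt0P; exists x.
have Hh : has (walkn e x y) (iota 0 #|T|) by rewrite has_find size_iota -/(dist e x y) H.
have := nth_find 0 Hh; rewrite -/(dist e x y) H nth_iota // add0n.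
move/existsP=> [p /andP [_ /eqP]]; by rewrite (tuple0 p).
Qed.

Lemma card3 (x v w : T) : x != v -> w != v -> x != w -> 2 < #|T|.
Proof.
move=> h1 h2 h3; apply: (leq_trans _ (max_card (mem (x |: [set v; w])))).
rewrite cardsU1 cards2 !inE (negbTE h1) (negbTE h3) /= eq_sym h2 //.
Qed.

Lemma card2 (x v : T) : x != v -> 1 < #|T|.
Proof.
move=> h1; apply: (leq_trans _ (max_card (mem [set x; v]))).
by rewrite cards2 h1.
Qed.

End Aux.

Theorem theorem7 (T : finType) (e : rel T) (k : nat) :
  simple_graph e -> connected_graph e -> res_wt_eq e k ->
  max_degree e <= 2 ^ (k - 1) + k - 1.
Proof.
move=> [esym eirr] _ [k0 [allk _]].
have p2 : 0 < 2 ^ (k - 1) by rewrite expn_gt0.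
rewrite /max_degree; apply/bigmax_leqP => v _.
set N := [set u | e v u].
case: (ltnP #|N| (k - 1)) => Hc; first by lia.
set S := [set x in take (k - 1) (enum N)].
have SN : S \subset N.
  apply/subsetP => x; rewrite inE => /mem_take; by rewrite mem_enum.
have cS : #|S| = k - 1.
  rewrite cardsE; move/card_uniqP: (take_uniq (k - 1) (enum_uniq (mem N))) ->.
  rewrite size_take -cardE; case: ltnP => // HH; apply/eqP; rewrite eqn_leq HH; exact: Hc.
have vS : v \notin S.
  apply/negP => /(subsetP SN); by rewrite inE eirr.
clearbody S.
set W := v |: S.
have cW : #|W| = k by rewrite cardsU1 vS cS; lia.
have [res _] := allk W cW.
have nbv : forall x, x \in N -> x != v.
  move=> x; rewrite inE => hx; apply/eqP => exv; by rewrite exv eirr in hx.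
have dv : forall x, x \in N -> dist e x v = 1.
  move=> x hx; have hxv := nbv x hx.
  have h1 : dist e x v <= 1.
    apply: dist_le; last exact: card2 hxv.
    apply/existsP; exists [tuple v]; rewrite /= andbT.
    by rewrite eqxx andbT; move: hx; rewrite inE esym.
  have : dist e x v != 0 by apply/eqP => /dist0 H; rewrite H eqxx in hxv.
  lia.
have dw : forall x w, x \in N -> w \in N -> x != w ->
    1 <= dist e x w <= 2.
  move=> x w hx hw hxw.
  have h2 : dist e x w <= 2.
    apply: dist_le; last exact: card3 (nbv x hx) (nbv w hw) hxw.
    apply/existsP; exists [tuple v; w]; rewrite /= eqxx !andbT.
    move: hx hw; rewrite !inE esym => -> -> //.
  have : dist e x w != 0 by apply/eqP => /dist0 H; rewrite H eqxx in hxw.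
  lia.
pose f x := [set w in S | dist e x w == 1].
have finj : {in N :\: W &, injective f}.
  move=> x y hx hy fxy; apply/eqP; apply/negP => /negP hxy.
  have [w wW dne] := res x y hxy.
  move: hx hy => /setDP [hxN hxW] /setDP [hyN hyW].
  move: hxW hyW; rewrite !in_setU1 !negb_or => /andP [_ xS] /andP [_ yS].
  move: wW; rewrite in_setU1 => /orP [/eqP wv|wS].
    by rewrite wv (dv x hxN) (dv y hyN) eqxx in dne.
  have wN : w \in N by apply: (subsetP SN).
  have hxw : x != w by apply/eqP => H; rewrite H wS in xS.
  have hyw : y != w by apply/eqP => H; rewrite H wS in yS.
  have := dw x w hxN wN hxw.
  have := dw y w hyN wN hyw.
  have : (dist e x w == 1) = (dist e y w == 1).
    have : (w \in f x) = (w \in f y) by rewrite fxy.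
    by rewrite /f !inE wS.
  move: dne; case: eqP => // Ha; case: eqP => // Hb; lia.
have cD : #|N :\: W| <= 2 ^ (k - 1).
  rewrite -(card_in_imset finj) -cS -card_powerset; apply: subset_leq_card.
  apply/subsetP => _ /imsetP [x _ ->]; rewrite inE; apply/subsetP => w.
  by rewrite inE => /andP [].
have cI : #|N :&: W| <= k - 1.
  rewrite -cS; apply: subset_leq_card; apply/subsetP => x.
  rewrite !inE => /andP [hx /orP [/eqP xv|//]].
  by rewrite xv eirr in hx.
have := cardsID W N; lia.
Qed.
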